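(* Let $n\ge 3$, $1<k<n/2$ and $p_{se}:=\frac{nk}{n-2k}<p<p_{so}:=\frac{(n+2)k}{n-2k}$. Then problem (1.6) has no regular solution.
   Context: Here $C_{n-1}^{k-1}$ denotes the binomial coefficient. Problem (1.6) is: given $\rho>0$, find $u$ with $$-\tfrac{1}{k}C_{n-1}^{k-1}\big(r^{n-k}|u'|^{k-1}u'\big)'=r^{n-1}u^{p},\quad u(r)>0 \text{ for all } r>0,\qquad u'(0)=0,\ u(0)=\rho .$$ A solution $u$ of (1.6) is called regular if the function $x\mapsto u(|x|)$ belongs to $C^2(\mathbb{R}^n)$. *)

(* Defs.v *)
From Stdlib Require Import Reals Lra Lia.
Open Scope R_scope.

(* Points of R^n are represented as functions nat -> R; only the
   coordinates 0..n-1 are used (norms, distances, partial derivatives). *)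

Fixpoint sumR (n : nat) (f : nat -> R) : R :=
  match n with
  | O => 0
  | S m => sumR m f + f m
  end.

Definition dist_n (n : nat) (x y : nat -> R) : R :=
  sqrt (sumR n (fun i => (x i - y i) ^ 2)).

Definition norm_n (n : nat) (x : nat -> R) : R := dist_n n x (fun _ => 0).

Definition cont_n (n : nat) (f : (nat -> R) -> R) : Prop :=
  forall x eps, 0 < eps -> exists delta, 0 < delta /\
    forall y, dist_n n x y < delta -> Rabs (f y - f x) < eps.

Definition upd (x : nat -> R) (i : nat) (t : R) : nat -> R :=
  fun j => if Nat.eq_dec j i then x i + t else x j.

Definition partial_lim (f : (nat -> R) -> R) (i : nat) (x : nat -> R) (l : R) : Prop :=
  derivable_pt_lim (fun t => f (upd x i t)) 0 l.

Definition C2_n (n : nat) (f : (nat -> R) -> R) : Prop :=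
  cont_n n f /\
  exists (g : nat -> (nat -> R) -> R) (h : nat -> nat -> (nat -> R) -> R),
    (forall i, (i < n)%nat -> forall x, partial_lim f i x (g i x)) /\
    (forall i j, (i < n)%nat -> (j < n)%nat -> forall x, partial_lim (g i) j x (h i j x)) /\
    (forall i, (i < n)%nat -> cont_n n (g i)) /\
    (forall i j, (i < n)%nat -> (j < n)%nat -> cont_n n (h i j)).

Definition right_deriv0 (u : R -> R) (l : R) : Prop :=
  forall eps, 0 < eps -> exists delta, 0 < delta /\
    forall h, 0 < h < delta -> Rabs ((u h - u 0) / h - l) < eps.

(* u solves problem (1.6) (u is only relevant on [0, +oo)):
   -(1/k) C(n-1,k-1) (r^(n-k) |u'|^(k-1) u')' = r^(n-1) u^p  for r > 0,
   u(r) > 0 for r > 0, u'(0) = 0, u(0) = rho. *)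
Definition solves_1_6 (n k : nat) (p rho : R) (u : R -> R) : Prop :=
  (exists du dw : R -> R,
     (forall r, 0 < r -> derivable_pt_lim u r (du r)) /\
     (forall r, 0 < r ->
        derivable_pt_lim (fun s => s ^ (n - k) * (Rabs (du s)) ^ (k - 1) * du s) r (dw r)) /\
     (forall r, 0 < r ->
        - (1 / INR k) * C (n - 1) (k - 1) * dw r = r ^ (n - 1) * Rpower (u r) p)) /\
  (forall r, 0 < r -> 0 < u r) /\
  right_deriv0 u 0 /\
  u 0 = rho.

Definition regular_solution (n k : nat) (p rho : R) (u : R -> R) : Prop :=
  solves_1_6 n k p rho u /\ C2_n n (fun x => u (norm_n n x)).

(* Main.v *)
Require Import Defs.
From Stdlib Require Import Reals Lra Lia.
Open Scope R_scope.

Lemma dl_eq f x l l' : derivable_pt_lim f x l -> l = l' -> derivable_pt_lim f x l'.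
Proof. intros H ->; exact H. Qed.
Lemma dl_plus f g x a b : derivable_pt_lim f x a -> derivable_pt_lim g x b ->
  derivable_pt_lim (fun s => f s + g s) x (a + b).
Proof. intros; apply (derivable_pt_lim_plus f g); auto. Qed.
Lemma dl_minus f g x a b : derivable_pt_lim f x a -> derivable_pt_lim g x b ->
  derivable_pt_lim (fun s => f s - g s) x (a - b).
Proof. intros; apply (derivable_pt_lim_minus f g); auto. Qed.
Lemma dl_mult f g x a b : derivable_pt_lim f x a -> derivable_pt_lim g x b ->
  derivable_pt_lim (fun s => f s * g s) x (a * g x + f x * b).
Proof. intros; apply (derivable_pt_lim_mult f g); auto. Qed.
Lemma dl_const c x : derivable_pt_lim (fun _ => c) x 0.
Proof. apply derivable_pt_lim_const. Qed.
Lemma dl_id x : derivable_pt_lim (fun s => s) x 1.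
Proof. apply derivable_pt_lim_id. Qed.
Lemma dl_scal c f x a : derivable_pt_lim f x a -> derivable_pt_lim (fun s => c * f s) x (c * a).
Proof. intros H. eapply dl_eq. apply (dl_mult (fun _ => c) f); [apply dl_const|exact H]. ring. Qed.
Lemma dl_opp f x a : derivable_pt_lim f x a -> derivable_pt_lim (fun s => - f s) x (- a).
Proof. intros; apply (derivable_pt_lim_opp f); auto. Qed.
Lemma dl_pw x e : 0 < x -> derivable_pt_lim (fun s => Rpower s e) x (e * Rpower x (e - 1)).
Proof. apply derivable_pt_lim_power. Qed.
Lemma dl_pwc f x a e : derivable_pt_lim f x a -> 0 < f x ->
  derivable_pt_lim (fun s => Rpower (f s) e) x (e * Rpower (f x) (e - 1) * a).
Proof. intros H hp. eapply dl_eq.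
  apply (derivable_pt_lim_comp f (fun s => Rpower s e)); [exact H| apply dl_pw; exact hp].
  ring. Qed.

Lemma mono_le f f' a b : a <= b -> (forall r, a <= r <= b -> derivable_pt_lim f r (f' r)) ->
  (forall r, a <= r <= b -> 0 <= f' r) -> f a <= f b.
Proof. intros hab hd hp. destruct (Rle_lt_or_eq_dec a b hab) as [h|h].
  - destruct (MVT_cor2 f f' a b h hd) as [c [E hc]].
    assert (0 <= f' c) by (apply hp; lra). nra.
  - subst; lra. Qed.
Lemma mono_lt f f' a b : a < b -> (forall r, a <= r <= b -> derivable_pt_lim f r (f' r)) ->
  (forall r, a <= r <= b -> 0 < f' r) -> f a < f b.
Proof. intros h hd hp.
  destruct (MVT_cor2 f f' a b h hd) as [c [E hc]].
  assert (0 < f' c) by (apply hp; lra). nra. Qed.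

Lemma pw_pos x e : 0 < Rpower x e.
Proof. unfold Rpower; apply exp_pos. Qed.
Lemma exp_le_mono a b : a <= b -> exp a <= exp b.
Proof. intros h; destruct (Rle_lt_or_eq_dec a b h) as [h'|h'];
  [left; apply exp_increasing; auto| subst; lra]. Qed.
Lemma ln_le_mono a b : 0 < a -> a <= b -> ln a <= ln b.
Proof. intros h0 h; destruct (Rle_lt_or_eq_dec a b h) as [h'|h'];
  [left; apply ln_increasing; auto| subst; lra]. Qed.
Lemma pw_inv x y : 0 < x -> Rpower (/ x) y = Rpower x (- y).
Proof. intros; unfold Rpower; rewrite ln_Rinv; auto; f_equal; ring. Qed.
Lemma pw_mul x y e : 0 < x -> 0 < y -> Rpower (x * y) e = Rpower x e * Rpower y e.
Proof. intros; rewrite Rpower_mult_distr; auto. Qed.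
Lemma pw_add x a b : Rpower x (a + b) = Rpower x a * Rpower x b.
Proof. apply Rpower_plus. Qed.
Lemma pw_le_base x y e : 0 <= e -> 0 < x -> x <= y -> Rpower x e <= Rpower y e.
Proof. intros; apply Rle_Rpower_l; auto. Qed.
Lemma pw_one x : 0 < x -> Rpower x 1 = x.
Proof. apply Rpower_1. Qed.
Lemma pw_ext x a b : a = b -> Rpower x a = Rpower x b.
Proof. intros ->; auto. Qed.

Lemma le0_eps X C d b : 0 < d -> 0 < b -> (forall e, 0 < e < d -> X <= C * Rpower e b) -> X <= 0.
Proof. intros hd hb H. destruct (Rle_or_lt X 0) as [h|h]; auto. exfalso.
  destruct (Rle_or_lt C 0) as [hC|hC].
  - specialize (H (d/2) ltac:(lra)). pose proof (pw_pos (d/2) b). nra.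
  - set (e0 := Rpower (X / (2*C)) (/ b)).
    assert (he0 : 0 < e0) by apply pw_pos.
    set (e := Rmin (d/2) e0).
    assert (he : 0 < e) by (apply Rmin_pos; lra).
    assert (hle : e <= e0) by apply Rmin_r.
    assert (hle2 : e <= d/2) by apply Rmin_l.
    specialize (H e ltac:(lra)).
    assert (Rpower e b <= Rpower e0 b) by (apply pw_le_base; lra).
    assert (Rpower e0 b = X / (2*C)).
    { unfold e0. rewrite Rpower_mult. replace (/ b * b) with 1 by (field; lra).
      apply pw_one. apply Rdiv_lt_0_compat; lra. }
    assert (C * Rpower e b <= C * (X / (2*C))) by (apply Rmult_le_compat_l; lra).
    assert (C * (X / (2*C)) = X/2) by (field; lra). lra.
Qed.

Lemma large_r th E Z : 0 < th -> 0 < Z -> exists r, 1 <= r /\ E * Rpower r (- th) < Z.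
Proof. intros hth hZ. set (T := Rmax 1 (2 * Rabs E / Z + 1)).
  assert (hT1 : 1 <= T) by apply Rmax_l.
  assert (hT2 : 2 * Rabs E / Z + 1 <= T) by apply Rmax_r.
  exists (Rpower T (/ th)). split.
  - rewrite <- (Rpower_O T) by lra. apply Rle_Rpower; auto. left; apply Rinv_0_lt_compat; auto.
  - rewrite Rpower_mult. replace (/ th * - th) with (Ropp 1) by (field; lra).
    rewrite Rpower_Ropp, pw_one by lra.
    assert (0 <= Rabs E) by apply Rabs_pos.
    assert (E <= Rabs E) by apply RRle_abs.
    assert (2 * Rabs E / Z * Z = 2 * Rabs E) by (field; lra).
    assert (E * / T <= Rabs E * / T).
    { apply Rmult_le_compat_r; auto. left; apply Rinv_0_lt_compat; lra. }
    assert (Rabs E * / T < Z).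
    { apply (Rmult_lt_reg_r T); [lra|]. rewrite Rmult_assoc, Rinv_l by lra. nra. }
    lra.
Qed.

Lemma core (N K p c : R) (u du V dV : R -> R) :
  0 < K -> 2 * K < N -> N * K < p * (N - 2 * K) -> p * (N - 2 * K) < (N + 2) * K ->
  0 < c ->
  (forall r, 0 < r -> derivable_pt_lim u r (du r)) ->
  (forall r, 0 < r -> derivable_pt_lim V r (dV r)) ->
  (forall r, 0 < r -> c * dV r = Rpower r (N - 1) * Rpower (u r) p) ->
  (forall r, 0 < r -> 0 < u r) ->
  (forall r, 0 < r -> 0 < V r) ->
  (forall r, 0 < r -> du r = - (Rpower (V r) (/ K) * Rpower r ((K - N) / K))) ->
  (exists d M, 0 < d /\ forall e, 0 < e < d -> V e <= M * e /\ u e <= M) ->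
  False.
Proof.
  intros hK hNK hp1 hp2 hc Hu HV Heq Hup HVp Hdu [d [M [hd HM]]].
  assert (hN : 0 < N) by lra.
  assert (hpK : K < p).
  { assert (N * K > K * (N - 2 * K)) by nra. nra. }
  assert (hp : 0 < p) by lra.
  assert (hdun : forall r, 0 < r -> du r < 0).
  { intros r hr. rewrite Hdu by auto. pose proof (pw_pos (V r) (/K)).
    pose proof (pw_pos r ((K - N) / K)). nra. }
  assert (udec : forall s r, 0 < s -> s <= r -> u r <= u s).
  { intros s r hs hsr.
    assert (- u s <= - u r); [|lra].
    apply (mono_le (fun x => - u x) (fun x => - du x)); auto.
    - intros x hx. apply dl_opp. apply Hu. lra.
    - intros x hx. assert (du x < 0) by (apply hdun; lra). lra. }
  assert (SA : forall r, 0 < r -> Rpower r N * Rpower (u r) p / (N * c) <= V r).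
  { intros r hr. set (P := Rpower (u r) p).
    set (G := fun s => c * V s - Rpower s N * (P / N)).
    assert (HG : forall e, 0 < e < r -> G e <= G r).
    { intros e he. apply (mono_le G (fun s => c * dV s - N * Rpower s (N - 1) * P / N)).
      lra.
      - intros x hx. unfold G. eapply dl_eq. apply dl_minus.
        apply dl_scal. apply HV; lra.
        apply (dl_mult (fun s => Rpower s N) (fun _ => P / N)). apply dl_pw. lra. apply dl_const.
        field. lra.
      - intros x hx. rewrite Heq by lra.
        assert (u r <= u x) by (apply udec; lra).
        assert (P <= Rpower (u x) p) by (unfold P; apply pw_le_base; try lra; apply Hup; lra).
        pose proof (pw_pos x (N - 1)).
        replace (Rpower x (N - 1) * Rpower (u x) p - N * Rpower x (N - 1) * P / N)
          with (Rpower x (N - 1) * (Rpower (u x) p - P)) by (field; lra).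
        apply Rmult_le_pos; lra. }
    assert (- G r <= 0).
    { apply (le0_eps _ (P / N) r N); auto.
      intros e he. specialize (HG e he). unfold G in *.
      assert (0 < V e) by (apply HVp; lra).
      assert (0 < c * V e) by nra.
      replace (P / N * Rpower e N) with (Rpower e N * (P / N)) by (field; lra). lra. }
    unfold G in *.
    assert (Rpower r N * (P / N) <= c * V r) by lra.
    apply (Rmult_le_reg_l c); auto.
    replace (c * (Rpower r N * P / (N * c))) with (Rpower r N * (P / N)) by (field; lra). lra. }

  set (a0 := Rpower (N * c) (- / K)).
  set (b := (p / K - 1) * a0 / 2).
  assert (ha0 : 0 < a0) by apply pw_pos.
  assert (hpK1 : 0 < p / K - 1).
  { assert (1 < p / K); [|lra]. apply (Rmult_lt_reg_r K); auto. field_simplify; lra. }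
  assert (hb : 0 < b) by (unfold b; nra).
  assert (SB0 : forall r, 0 < r -> b * (r * r) <= Rpower (u r) (1 - p / K)).
  { intros r hr.
    set (h := fun s => Rpower (u s) (1 - p / K) - b * (s * s)).
    assert (Hh : forall e, 0 < e < r -> h e <= h r).
    { intros e he.
      apply (mono_le h (fun s => (1 - p / K) * Rpower (u s) (1 - p / K - 1) * du s - b * (1 * s + s * 1))).
      lra.
      - intros x hx. unfold h. apply dl_minus.
        apply dl_pwc. apply Hu; lra. apply Hup; lra.
        apply dl_scal. apply (dl_mult (fun s => s) (fun s => s)); apply dl_id.
      - intros x hx. assert (hx0 : 0 < x) by lra.
        rewrite Hdu by lra.
        pose proof (SA x hx0) as hA.
        assert (hV : Rpower (Rpower x N * Rpower (u x) p / (N * c)) (/ K) <= Rpower (V x) (/ K)).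
        { apply pw_le_base. left; apply Rinv_0_lt_compat; auto.
          pose proof (pw_pos x N). pose proof (pw_pos (u x) p).
          apply Rdiv_lt_0_compat; nra. auto. }
        unfold Rdiv at 1 in hV.
        rewrite !pw_mul in hV; try (apply pw_pos); try (apply Rinv_0_lt_compat; nra);
          try (apply Rmult_lt_0_compat; apply pw_pos).
        rewrite !Rpower_mult, pw_inv in hV by nra.
        fold a0 in hV.
        pose proof (pw_pos (u x) (1 - p / K - 1)).
        pose proof (pw_pos x ((K - N) / K)).
        assert (hc1 : 0 <= (p / K - 1) * Rpower (u x) (1 - p / K - 1) * Rpower x ((K - N) / K)).
        { apply Rmult_le_pos; [apply Rmult_le_pos|]; lra. }
        assert (hm := Rmult_le_compat_l _ _ _ hc1 hV).
        assert (E1 : (p / K - 1) * Rpower (u x) (1 - p / K - 1) * Rpower x ((K - N) / K) *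
                 (Rpower x (N * / K) * Rpower (u x) (p * / K) * a0) = 2 * b * x).
        { unfold b.
          replace ((p / K - 1) * Rpower (u x) (1 - p / K - 1) * Rpower x ((K - N) / K) *
                 (Rpower x (N * / K) * Rpower (u x) (p * / K) * a0))
            with ((p / K - 1) * a0 * (Rpower (u x) (1 - p / K - 1) * Rpower (u x) (p * / K)) *
                  (Rpower x ((K - N) / K) * Rpower x (N * / K))) by ring.
          rewrite <- !pw_add.
          replace (1 - p / K - 1 + p * / K) with 0 by (field; lra).
          replace ((K - N) / K + N * / K) with 1 by (field; lra).
          rewrite pw_one by auto. rewrite Rpower_O by (apply Hup; lra). field; lra. }
        lra. }
    assert (- h r <= 0).
    { apply (le0_eps _ b (Rmin r 1) 1).
      apply Rmin_pos; lra. lra.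
      intros e he. assert (e < r) by (pose proof (Rmin_l r 1); lra).
      assert (e < 1) by (pose proof (Rmin_r r 1); lra).
      specialize (Hh e ltac:(lra)). unfold h in *. rewrite pw_one by lra.
      pose proof (pw_pos (u e) (1 - p / K)). assert (b * (e * e) <= b * e) by (apply Rmult_le_compat_l; nra). lra. }
    unfold h in *. lra. }
  set (al := 2 * K / (p - K)).
  set (K1 := Rpower b (- (K / (p - K)))).
  assert (hal : 0 < al) by (unfold al; apply Rdiv_lt_0_compat; lra).
  assert (SB : forall r, 0 < r -> u r <= K1 * Rpower r (- al)).
  { intros r hr. pose proof (SB0 r hr) as h0.
    assert (hu : 0 < u r) by auto.
    assert (hbr : 0 < b * (r * r)) by (apply Rmult_lt_0_compat; nra).
    assert (hl := ln_le_mono _ _ hbr h0).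
    rewrite ln_Rpower, !ln_mult in hl by nra.
    unfold K1, Rpower. rewrite <- exp_plus.
    rewrite <- (exp_ln (u r)) at 1 by auto. apply exp_le_mono.
    set (L := ln (u r)) in *. set (lb := ln b) in *. set (lr := ln r) in *.
    assert (he : 1 - p / K < 0) by lra.
    assert (E : - (K / (p - K)) * lb + - al * lr = (lb + (lr + lr)) / (1 - p / K)).
    { unfold al. field. split; lra. }
    rewrite E. apply (Rmult_le_reg_l (- (1 - p / K))). lra.
    replace (- (1 - p / K) * ((lb + (lr + lr)) / (1 - p / K))) with (- (lb + (lr + lr))) by (field; lra).
    lra. }

  assert (halK : al * (p - K) = 2 * K) by (unfold al; field; lra).
  set (be := N - al * p).
  assert (hbe : 0 < be).
  { unfold be. apply (Rmult_lt_reg_r (p - K)). lra. rewrite Rmult_0_l.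
    replace ((N - al * p) * (p - K)) with (N * (p - K) - p * (al * (p - K))) by ring.
    rewrite halK. nra. }
  assert (SC : forall r, 0 < r -> c * V r <= Rpower K1 p / be * Rpower r be).
  { intros r hr.
    set (G := fun s => c * V s - Rpower K1 p / be * Rpower s be).
    assert (HG : forall e, 0 < e < r -> G r <= G e).
    { intros e he.
      assert (- G e <= - G r); [|lra].
      apply (mono_le (fun s => - G s)
        (fun s => - (c * dV s - Rpower K1 p / be * (be * Rpower s (be - 1))))). lra.
      - intros x hx. unfold G. apply dl_opp. apply dl_minus.
        apply dl_scal. apply HV; lra. apply dl_scal. apply dl_pw; lra.
      - intros x hx. assert (hx0 : 0 < x) by lra. rewrite Heq by lra.
        assert (hu1 : Rpower (u x) p <= Rpower (K1 * Rpower x (- al)) p).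
        { apply pw_le_base; try lra. apply Hup; lra. apply SB; lra. }
        rewrite pw_mul, Rpower_mult in hu1 by (apply pw_pos).
        pose proof (pw_pos x (N - 1)).
        assert (E : Rpower x (N - 1) * Rpower x (- al * p) = Rpower x (be - 1)).
        { rewrite <- pw_add. apply pw_ext. unfold be; ring. }
        assert (Rpower x (N - 1) * Rpower (u x) p <= Rpower x (N - 1) * (Rpower K1 p * Rpower x (- al * p))).
        { apply Rmult_le_compat_l; lra. }
        assert (Rpower K1 p / be * (be * Rpower x (be - 1)) = Rpower K1 p * Rpower x (be - 1)) by (field; lra).
        nra. }
    assert (G r <= 0).
    { apply (le0_eps _ (c * M) (Rmin r d) 1).
      apply Rmin_pos; lra. lra.
      intros e he. assert (e < r) by (pose proof (Rmin_l r d); lra).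
      assert (e < d) by (pose proof (Rmin_r r d); lra).
      specialize (HG e ltac:(lra)). unfold G in *. rewrite pw_one by lra.
      destruct (HM e ltac:(lra)) as [HM1 _].
      pose proof (pw_pos e be). pose proof (pw_pos K1 p).
      assert (0 < Rpower K1 p / be) by (apply Rdiv_lt_0_compat; lra).
      assert (c * V e <= c * (M * e)) by (apply Rmult_le_compat_l; lra).
      assert (0 < Rpower K1 p / be * Rpower e be) by nra.
      nra. }
    unfold G in *. lra. }
  set (A := K * c / (K + 1)).
  set (B := / (p + 1)).
  set (D := c * (N - 2 * K) / (K + 1)).
  set (ga := N / (p + 1) - (N - 2 * K) / (K + 1)).
  assert (hga : 0 < ga).
  { unfold ga. apply (Rmult_lt_reg_r ((p + 1) * (K + 1))). nra. rewrite Rmult_0_l.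
    replace ((N / (p + 1) - (N - 2 * K) / (K + 1)) * ((p + 1) * (K + 1)))
      with (N * (K + 1) - (N - 2 * K) * (p + 1)) by (field; lra). nra. }
  set (F := fun s => A * (Rpower (V s) ((K + 1) / K) * Rpower s ((2 * K - N) / K))
                    + B * (Rpower (u s) (p + 1) * Rpower s N) - D * (u s * V s)).
  assert (HF : forall s, 0 < s -> derivable_pt_lim F s (ga * (Rpower s (N - 1) * Rpower (u s) (p + 1)))).
  { intros s hs. unfold F. eapply dl_eq.
    apply dl_minus. apply dl_plus.
    apply dl_scal. apply (dl_mult (fun s => Rpower (V s) ((K + 1) / K)) (fun s => Rpower s ((2 * K - N) / K))).
    apply dl_pwc. apply HV; lra. apply HVp; lra. apply dl_pw; lra.
    apply dl_scal. apply (dl_mult (fun s => Rpower (u s) (p + 1)) (fun s => Rpower s N)).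
    apply dl_pwc. apply Hu; lra. apply Hup; lra. apply dl_pw; lra.
    apply dl_scal. apply (dl_mult u V). apply Hu; lra. apply HV; lra.
    assert (hVs := HVp s hs). assert (hus := Hup s hs).
    assert (E1 : Rpower (V s) ((K + 1) / K - 1) = Rpower (V s) (/ K)) by (apply pw_ext; field; lra).
    assert (E2 : Rpower (V s) ((K + 1) / K) = V s * Rpower (V s) (/ K)).
    { rewrite <- (pw_one (V s)) at 2 by lra. rewrite <- pw_add. apply pw_ext; field; lra. }
    assert (E3 : Rpower s ((2 * K - N) / K) = s * Rpower s ((K - N) / K)).
    { rewrite <- (pw_one s) at 2 by lra. rewrite <- pw_add. apply pw_ext; field; lra. }
    assert (E4 : Rpower s ((2 * K - N) / K - 1) = Rpower s ((K - N) / K)) by (apply pw_ext; field; lra).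
    assert (E5 : Rpower (u s) (p + 1 - 1) = Rpower (u s) p) by (apply pw_ext; ring).
    assert (E6 : Rpower (u s) (p + 1) = u s * Rpower (u s) p).
    { rewrite <- (pw_one (u s)) at 2 by lra. rewrite <- pw_add. apply pw_ext; ring. }
    assert (E7 : Rpower s N = s * Rpower s (N - 1)).
    { rewrite <- (pw_one s) at 2 by lra. rewrite <- pw_add. apply pw_ext; ring. }
    assert (E8 : dV s = Rpower s (N - 1) * Rpower (u s) p / c).
    { rewrite <- Heq by lra. field; lra. }
    rewrite E1, E2, E3, E4, E5, E6, E7, E8, (Hdu s hs).
    unfold A, B, D, ga. field. repeat split; lra. }

  assert (hD : 0 < D) by (unfold D; apply Rdiv_lt_0_compat; nra).
  assert (hF'pos : forall s, 0 < s -> 0 < ga * (Rpower s (N - 1) * Rpower (u s) (p + 1))).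
  { intros s hs. pose proof (pw_pos s (N - 1)). pose proof (pw_pos (u s) (p + 1)).
    apply Rmult_lt_0_compat; nra. }
  assert (Fmono : forall a b, 0 < a -> a <= b -> F a <= F b).
  { intros a b0 ha hab. apply (mono_le F (fun s => ga * (Rpower s (N - 1) * Rpower (u s) (p + 1)))); auto.
    intros x hx; apply HF; lra. intros x hx; left; apply hF'pos; lra. }
  assert (Fh : 0 <= F (1/2)).
  { assert (- F (1/2) <= 0); [|lra].
    apply (le0_eps _ (D * M * M) (Rmin (1/2) d) 1).
    apply Rmin_pos; lra. lra.
    intros e he. assert (e < 1/2) by (pose proof (Rmin_l (1/2) d); lra).
    assert (e < d) by (pose proof (Rmin_r (1/2) d); lra).
    assert (hFe := Fmono e (1/2) ltac:(lra) ltac:(lra)).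
    rewrite pw_one by lra.
    destruct (HM e ltac:(lra)) as [HM1 HM2].
    assert (hue := Hup e ltac:(lra)). assert (hVe := HVp e ltac:(lra)).
    assert (0 <= A * (Rpower (V e) ((K + 1) / K) * Rpower e ((2 * K - N) / K))).
    { unfold A. pose proof (pw_pos (V e) ((K + 1) / K)). pose proof (pw_pos e ((2 * K - N) / K)).
      apply Rmult_le_pos. left; apply Rdiv_lt_0_compat; nra. nra. }
    assert (0 <= B * (Rpower (u e) (p + 1) * Rpower e N)).
    { unfold B. pose proof (pw_pos (u e) (p + 1)). pose proof (pw_pos e N).
      apply Rmult_le_pos. left; apply Rinv_0_lt_compat; lra. nra. }
    assert (u e * V e <= M * (M * e)) by (apply Rmult_le_compat; lra).
    assert (D * (u e * V e) <= D * (M * (M * e))) by (apply Rmult_le_compat_l; lra).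
    assert (F e >= - (D * (u e * V e))) by (unfold F; lra). nra. }
  assert (F1 : 0 < F 1).
  { assert (F (1/2) < F 1); [|lra].
    apply (mono_lt F (fun s => ga * (Rpower s (N - 1) * Rpower (u s) (p + 1)))). lra.
    intros x hx; apply HF; lra. intros x hx; apply hF'pos; lra. }
  set (th := al * (K + 1) - N + 2 * K).
  assert (hth : 0 < th).
  { unfold th. apply (Rmult_lt_reg_r (p - K)). lra. rewrite Rmult_0_l.
    replace ((al * (K + 1) - N + 2 * K) * (p - K)) with (al * (p - K) * (K + 1) - (N - 2 * K) * (p - K)) by ring.
    rewrite halK. nra. }
  set (e1 := (K + 1) / K).
  set (C2 := Rpower K1 p / (be * c)).
  set (E := A * Rpower C2 e1 + B * Rpower K1 (p + 1)).
  destruct (large_r th E (F 1) hth F1) as [r [hr1 hrE]].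
  assert (hr : 0 < r) by lra.
  assert (hFr := Fmono 1 r ltac:(lra) hr1).
  assert (hVr : V r <= C2 * Rpower r be).
  { pose proof (SC r hr). apply (Rmult_le_reg_l c); auto. unfold C2.
    replace (c * (Rpower K1 p / (be * c) * Rpower r be)) with (Rpower K1 p / be * Rpower r be) by (field; lra).
    auto. }
  assert (hC2 : 0 < C2) by (unfold C2; apply Rdiv_lt_0_compat; [apply pw_pos| nra]).
  assert (he1 : 0 <= e1) by (unfold e1; left; apply Rdiv_lt_0_compat; lra).
  assert (T1 : Rpower (V r) e1 * Rpower r ((2 * K - N) / K) <= Rpower C2 e1 * Rpower r (- th)).
  { assert (Rpower (V r) e1 <= Rpower (C2 * Rpower r be) e1) by (apply pw_le_base; auto).
    rewrite pw_mul, Rpower_mult in H by (auto; apply pw_pos).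
    assert (Rpower r (be * e1) * Rpower r ((2 * K - N) / K) = Rpower r (- th)).
    { rewrite <- pw_add. apply pw_ext. unfold be, e1, th.
      apply (Rmult_eq_reg_r (p - K)); [|lra].
      replace ((N - al * p) * ((K + 1) / K) + (2 * K - N) / K) with
        ((N * (K + 1) + 2 * K - N) / K - al * p * ((K + 1) / K)) by (field; lra).
      replace (al * p) with (al * (p - K) + al * K) by ring. rewrite halK.
      field; lra. }
    pose proof (pw_pos r ((2 * K - N) / K)).
    assert (Rpower (V r) e1 * Rpower r ((2 * K - N) / K) <= Rpower C2 e1 * Rpower r (be * e1) * Rpower r ((2 * K - N) / K))
      by (apply Rmult_le_compat_r; lra).
    nra. }
  assert (T2 : Rpower (u r) (p + 1) * Rpower r N <= Rpower K1 (p + 1) * Rpower r (- th)).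
  { assert (Rpower (u r) (p + 1) <= Rpower (K1 * Rpower r (- al)) (p + 1)).
    { apply pw_le_base; try lra. apply Hup; lra. apply SB; lra. }
    rewrite pw_mul, Rpower_mult in H by (apply pw_pos).
    assert (Rpower r (- al * (p + 1)) * Rpower r N = Rpower r (- th)).
    { rewrite <- pw_add. apply pw_ext. unfold th.
      replace (- al * (p + 1) + N) with (- (al * (p - K)) - al * K - al + N) by ring.
      rewrite halK. ring. }
    pose proof (pw_pos r N).
    assert (Rpower (u r) (p + 1) * Rpower r N <= Rpower K1 (p + 1) * Rpower r (- al * (p + 1)) * Rpower r N)
      by (apply Rmult_le_compat_r; lra).
    nra. }
  assert (F r <= E * Rpower r (- th)).
  { unfold F, E. fold e1.
    assert (hur := Hup r hr). assert (hVr' := HVp r hr).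
    assert (0 < A) by (unfold A; apply Rdiv_lt_0_compat; nra).
    assert (0 < B) by (unfold B; apply Rinv_0_lt_compat; lra).
    assert (A * (Rpower (V r) e1 * Rpower r ((2 * K - N) / K)) <= A * (Rpower C2 e1 * Rpower r (- th)))
      by (apply Rmult_le_compat_l; lra).
    assert (B * (Rpower (u r) (p + 1) * Rpower r N) <= B * (Rpower K1 (p + 1) * Rpower r (- th)))
      by (apply Rmult_le_compat_l; lra).
    assert (0 <= D * (u r * V r)) by (apply Rmult_le_pos; nra).
    nra. }
  lra.
Qed.


Lemma sumR_single m f : (forall i, i <> 0%nat -> f i = 0) -> (1 <= m)%nat -> sumR m f = f 0%nat.
Proof. intros hf hm. induction m as [|m IH]; [lia|].
  change (sumR (S m) f) with (sumR m f + f m). destruct m as [|m'].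
  - simpl. ring.
  - rewrite IH by lia. rewrite (hf (S m')) by lia. ring. Qed.

Lemma sq_single m a : (forall i, i <> 0%nat -> a i = 0) -> (1 <= m)%nat ->
  sqrt (sumR m (fun i => (a i) ^ 2)) = Rabs (a 0%nat).
Proof. intros ha hm. rewrite (sumR_single m (fun i => (a i) ^ 2)); auto.
  - rewrite <- sqrt_Rsqr_abs. f_equal. unfold Rsqr; ring.
  - intros i hi. rewrite ha by auto. ring. Qed.

Definition zv : nat -> R := fun _ => 0.

Lemma norm_xt n t s : (1 <= n)%nat -> norm_n n (upd (upd zv 0 t) 0 s) = Rabs (t + s).
Proof. intros hn. unfold norm_n, dist_n.
  rewrite (sq_single n (fun i => upd (upd zv 0 t) 0 s i - 0)); auto.
  - unfold upd, zv. destruct (Nat.eq_dec 0 0); [|congruence]. f_equal. ring.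
  - intros i hi. unfold upd, zv. destruct (Nat.eq_dec i 0); [congruence|]. ring. Qed.

Lemma dist_xt n t : (1 <= n)%nat -> dist_n n (upd zv 0 0) (upd zv 0 t) = Rabs t.
Proof. intros hn. unfold dist_n.
  rewrite (sq_single n (fun i => upd zv 0 0 i - upd zv 0 t i)); auto.
  - unfold upd, zv. destruct (Nat.eq_dec 0 0); [|congruence].
    replace (0 + 0 - (0 + t)) with (- t) by ring. apply Rabs_Ropp.
  - intros i hi. unfold upd, zv. destruct (Nat.eq_dec i 0); [congruence|]. ring. Qed.

Theorem theorem1p1 (n k : nat) (p rho : R) :
  (3 <= n)%nat -> (1 < k)%nat -> (2 * k < n)%nat ->
  INR n * INR k / (INR n - 2 * INR k) < p ->
  p < (INR n + 2) * INR k / (INR n - 2 * INR k) ->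
  0 < rho ->
  ~ (exists u : R -> R, regular_solution n k p rho u).
Proof.
  intros hn hk hnk hp1 hp2 hrho [u [[[du [dw [Hd [Hw Heq]]]] [hpos [hr0 hu0]]] HC2]].
  set (N := INR n). set (Kr := INR k).
  assert (hK : 0 < Kr) by (unfold Kr; apply lt_0_INR; lia).
  assert (h2K : 2 * Kr < N).
  { unfold N, Kr. replace 2 with (INR 2) by (simpl; ring). rewrite <- mult_INR. apply lt_INR; lia. }
  assert (hNK : 0 < N - 2 * Kr) by lra.
  assert (hp1' : N * Kr < p * (N - 2 * Kr)).
  { apply (Rmult_lt_compat_r (N - 2 * Kr)) in hp1; auto. fold N Kr in hp1.
    replace (N * Kr / (N - 2 * Kr) * (N - 2 * Kr)) with (N * Kr) in hp1 by (field; lra). lra. }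
  assert (hp2' : p * (N - 2 * Kr) < (N + 2) * Kr).
  { apply (Rmult_lt_compat_r (N - 2 * Kr)) in hp2; auto. fold N Kr in hp2.
    replace ((N + 2) * Kr / (N - 2 * Kr) * (N - 2 * Kr)) with ((N + 2) * Kr) in hp2 by (field; lra). lra. }
  set (c := C (n - 1) (k - 1) / Kr).
  assert (hc : 0 < c).
  { unfold c, C. apply Rdiv_lt_0_compat; auto. apply Rdiv_lt_0_compat. apply INR_fact_lt_0.
    apply Rmult_lt_0_compat; apply INR_fact_lt_0. }
  set (V := fun r => - (r ^ (n - k) * Rabs (du r) ^ (k - 1) * du r)).
  set (dV := fun r => - dw r).
  assert (HV : forall r, 0 < r -> derivable_pt_lim V r (dV r)).
  { intros r hr. apply dl_opp. apply Hw; auto. }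
  assert (HeqV : forall r, 0 < r -> c * dV r = Rpower r (N - 1) * Rpower (u r) p).
  { intros r hr. unfold N. replace (INR n - 1) with (INR (n - 1)) by (rewrite minus_INR by lia; simpl; ring).
    rewrite Rpower_pow by auto. rewrite <- Heq by auto. unfold c, dV. fold Kr. field. lra. }
  assert (hdV : forall r, 0 < r -> 0 < dV r).
  { intros r hr. pose proof (HeqV r hr). pose proof (pw_pos r (N - 1)).
    pose proof (pw_pos (u r) p). assert (0 < c * dV r) by nra. nra. }
  destruct HC2 as [_ [g [h [Hg [_ [Hgc _]]]]]].
  assert (hn1 : (1 <= n)%nat) by lia.
  assert (Hgdu : forall t, 0 < t -> g 0%nat (upd zv 0 t) = du t).
  { intros t ht. apply (uniqueness_limite (fun s => u (norm_n n (upd (upd zv 0 t) 0 s))) 0).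
    - apply Hg. lia.
    - intros eps heps. destruct (Hd t ht eps heps) as [del Hdel].
      assert (hm : 0 < Rmin del t) by (apply Rmin_pos; [apply cond_pos|auto]).
      exists (mkposreal _ hm). intros hh hh0 hlt. simpl in hlt.
      assert (Rabs hh < del) by (pose proof (Rmin_l del t); lra).
      assert (Rabs hh < t) by (pose proof (Rmin_r del t); lra).
      rewrite !norm_xt by auto.
      rewrite Rplus_0_r, (Rabs_right t) by lra.
      assert (t + (0 + hh) >= 0) by (pose proof (Rle_abs (- hh)); rewrite Rabs_Ropp in *; lra).
      rewrite (Rabs_right (t + (0 + hh))) by lra. rewrite Rplus_0_l.
      apply Hdel; auto. }
  destruct (Hgc 0%nat ltac:(lia) (upd zv 0 0) 1 ltac:(lra)) as [del1 [hdel1 Hdel1]].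
  set (M1 := Rabs (g 0%nat (upd zv 0 0)) + 1).
  assert (HM1 : forall t, 0 < t < del1 -> Rabs (du t) <= M1).
  { intros t ht. rewrite <- Hgdu by lra.
    assert (Rabs (g 0%nat (upd zv 0 t) - g 0%nat (upd zv 0 0)) < 1).
    { apply Hdel1. rewrite dist_xt by auto. rewrite Rabs_right; lra. }
    unfold M1. pose proof (Rabs_triang_inv (g 0%nat (upd zv 0 t)) (g 0%nat (upd zv 0 0))). lra. }
  destruct (hr0 1 ltac:(lra)) as [del2 [hdel2 Hdel2]].
  set (M := M1 ^ (k - 1) * M1 + u 0 + 1).
  set (de := Rmin (Rmin del1 del2) 1).
  assert (hde : 0 < de) by (apply Rmin_pos; [apply Rmin_pos|]; lra).
  assert (hde1 : de <= del1) by (pose proof (Rmin_l (Rmin del1 del2) 1); pose proof (Rmin_l del1 del2); unfold de; lra).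
  assert (hde2 : de <= del2) by (pose proof (Rmin_l (Rmin del1 del2) 1); pose proof (Rmin_r del1 del2); unfold de; lra).
  assert (hde3 : de <= 1) by (apply Rmin_r).
  assert (HM1p : 0 <= M1) by (unfold M1; pose proof (Rabs_pos (g 0%nat (upd zv 0 0))); lra).
  assert (HVb : forall e, 0 < e < de -> Rabs (V e) <= M * e /\ u e <= M).
  { intros e he.
    assert (hue : u e - u 0 < e).
    { specialize (Hdel2 e ltac:(lra)). rewrite Rminus_0_r in Hdel2.
      pose proof (Rle_abs ((u e - u 0) / e)).
      assert ((u e - u 0) / e < 1) by lra.
      apply (Rmult_lt_compat_r e) in H0; [|lra].
      replace ((u e - u 0) / e * e) with (u e - u 0) in H0 by (field; lra). lra. }
    assert (hdu := HM1 e ltac:(lra)).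
    assert (hpk : 0 <= M1 ^ (k - 1) * M1) by (apply Rmult_le_pos; auto; apply pow_le; auto).
    split.
    - unfold V. rewrite Rabs_Ropp, !Rabs_mult, <- !RPow_abs, Rabs_Rabsolu.
      rewrite (Rabs_right e) by lra.
      assert (e ^ (n - k) <= e).
      { replace (n - k)%nat with (S (n - k - 1)) by lia. simpl.
        assert (e ^ (n - k - 1) <= 1).
        { rewrite <- (pow1 (n - k - 1)). apply pow_incr; lra. }
        pose proof (pow_le e (n - k - 1) ltac:(lra)). nra. }
      assert (Rabs (du e) ^ (k - 1) <= M1 ^ (k - 1)) by (apply pow_incr; split; [apply Rabs_pos|auto]).
      assert (Rabs (du e) ^ (k - 1) * Rabs (du e) <= M1 ^ (k - 1) * M1).
      { apply Rmult_le_compat; auto; try apply Rabs_pos. apply pow_le, Rabs_pos. }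
      pose proof (pow_le e (n - k) ltac:(lra)).
      assert (0 <= Rabs (du e) ^ (k - 1) * Rabs (du e)) by (apply Rmult_le_pos; [apply pow_le|]; apply Rabs_pos).
      assert (e ^ (n - k) * (Rabs (du e) ^ (k - 1) * Rabs (du e)) <= e * (M1 ^ (k - 1) * M1))
        by (apply Rmult_le_compat; auto).
      unfold M. pose proof (hpos e ltac:(lra)). nra.
    - unfold M. lra. }
  assert (HVp : forall r, 0 < r -> 0 < V r).
  { intros r hr.
    assert (V (r / 2) < V r).
    { apply (mono_lt V dV). lra. intros x hx; apply HV; lra. intros x hx; apply hdV; lra. }
    assert (- V (r / 2) <= 0); [|lra].
    apply (le0_eps _ M (Rmin de (r / 2)) 1). apply Rmin_pos; lra. lra.
    intros e he. assert (e < de) by (pose proof (Rmin_l de (r/2)); lra).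
    assert (e < r / 2) by (pose proof (Rmin_r de (r/2)); lra).
    assert (V e <= V (r / 2)).
    { apply (mono_le V dV). lra. intros x hx; apply HV; lra. intros x hx; left; apply hdV; lra. }
    destruct (HVb e ltac:(lra)) as [h1 _]. rewrite pw_one by lra.
    pose proof (Rle_abs (- V e)) as hab. rewrite Rabs_Ropp in hab. lra. }
  apply (core N Kr p c u du V dV); auto.
  - intros r hr.
    assert (hVr := HVp r hr).
    assert (hdun : du r < 0).
    { destruct (Rlt_or_le (du r) 0) as [h1|h1]; auto. exfalso. unfold V in hVr.
      pose proof (pow_le r (n - k) ltac:(lra)). pose proof (pow_le (Rabs (du r)) (k - 1) (Rabs_pos _)).
      assert (0 <= r ^ (n - k) * Rabs (du r) ^ (k - 1)) by (apply Rmult_le_pos; auto). nra. }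
    set (v := - du r).
    assert (hv : 0 < v) by (unfold v; lra).
    assert (EV : V r = r ^ (n - k) * v ^ k).
    { unfold V. rewrite Rabs_left by auto. fold v. replace (du r) with (- v) by (unfold v; ring).
      assert (hvk : v ^ k = v ^ (k - 1) * v).
      { destruct k as [|k']; [lia|]. simpl. rewrite Nat.sub_0_r. ring. }
      rewrite hvk. ring. }
    rewrite EV. rewrite <- !Rpower_pow by auto.
    rewrite pw_mul by (apply pw_pos). rewrite !Rpower_mult.
    fold Kr. replace (Kr * / Kr) with 1 by (field; lra). rewrite pw_one by auto.
    rewrite minus_INR by lia. fold N Kr.
    replace (Rpower r ((N - Kr) * / Kr) * v * Rpower r ((Kr - N) / Kr))
      with (v * (Rpower r ((N - Kr) * / Kr) * Rpower r ((Kr - N) / Kr))) by ring.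
    rewrite <- pw_add. replace ((N - Kr) * / Kr + (Kr - N) / Kr) with 0 by (field; lra).
    rewrite Rpower_O by auto. unfold v; ring.
  - exists de, M. split; auto. intros e he. destruct (HVb e he) as [h1 h2]. split; auto.
    pose proof (Rle_abs (V e)). lra.
Qed.
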